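(* The category of abelian group objects in $\mathbf{DPAlg}_R$ (equivalently, by the preceding result, $DP$ algebras with zero multiplication, with $DP$ algebra maps) is equivalent to the category of left $U(0)$-modules. Under this equivalence a $DP$ algebra $A$ with zero product corresponds to its underlying $R$-module with $\phi_p$ acting as $\gamma_p$ for each prime $p$, and conversely a left $U(0)$-module $M$ becomes a $DP$ algebra with zero product and $\gamma_n=\phi_n$ (action of the element $\phi_n\in U(0)$) for all $n\ge1$.
   Context: Fix a commutative unital ring $R$; unadorned $\otimes$ means $\otimes_R$. An ''algebra'' means a commutative, not necessarily unital, $R$-algebra. A $DP$ algebra is an algebra $A$ with maps $\gamma_n:A\to A$ ($n\ge1$) such that for all $a,b\in A$, $r\in R$, $m,n\ge1$: $\gamma_1(a)=a$; $\gamma_n(a+b)=\gamma_n(a)+\sum_{i+j=n,\,i,j\ge1}\gamma_i(a)\gamma_j(b)+\gamma_n(b)$; $\gamma_n(ab)=a^n\gamma_n(b)$; $\gamma_n(rb)=r^n\gamma_n(b)$; $\gamma_m(a)\gamma_n(a)=\frac{(m+n)!}{m!\,n!}\gamma_{m+n}(a)$; $\gamma_m(\gamma_n(a))=\frac{(mn)!}{m!(n!)^m}\gamma_{mn}(a)$. $\mathbf{DPAlg}_R$ is the category of $DP$ algebras and algebra maps commuting with all $\gamma_n$. $U(0)$ is the (generally non-commutative, non-$R$-central) unital ring generated by $R$ and symbols $\phi_p$, one for each prime $p$, which commute with one another, subject to the relations $p\phi_p=0$ and $\phi_p r=r^p\phi_p$ for $r\in R$. Set $\phi_1=1$, $\phi_{p^e}=\phi_p^e$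 for $p$ prime and $e\ge1$, and $\phi_n=0$ if $n>1$ is not a prime power. Thus a left $U(0)$-module is an $R$-module $M$ with additive endomorphisms $\phi_p$ ($p$ prime), pairwise commuting, with $p\phi_p=0$ and $\phi_p(rx)=r^p\phi_p(x)$. *)

(* Defs.v *)
From HB Require Import structures.
From mathcomp Require Import all_boot all_algebra.
Set Implicit Arguments. Unset Strict Implicit. Unset Printing Implicit Defensive.
Import GRing.Theory.
Local Open Scope ring_scope.

Section DP.
Variable R : comPzRingType.

(* n-fold product a^n (n >= 1) in a possibly non-unital algebra with product mul *)
Definition npow (A : Type) (mul : A -> A -> A) (a : A) (n : nat) : A :=
  iter n.-1 (mul a) a.

(* A commutative, not necessarily unital, R-algebra structure mul on the
   R-module A, together with divided powers gamma (gamma n for n >= 1;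
   gamma 0 is irrelevant). *)
Definition isDPAlg (A : lmodType R) (mul : A -> A -> A) (gamma : nat -> A -> A)
  : Prop :=
  [/\ (forall a b, mul a b = mul b a),
      (forall a b c, mul a (mul b c) = mul (mul a b) c),
      (forall a b c, mul (a + b) c = mul a c + mul b c),
      (forall (r : R) a b, mul (r *: a) b = r *: mul a b)
    & [/\ (forall a, gamma 1%N a = a) /\
          (forall (n : nat) a b, (0 < n)%N ->
             gamma n (a + b) = gamma n a
               + \sum_(1 <= i < n) mul (gamma i a) (gamma (n - i)%N b)
               + gamma n b),
          (forall (n : nat) a b, (0 < n)%N ->
             gamma n (mul a b) = mul (npow mul a n) (gamma n b)),
          (forall (n : nat) (r : R) b, (0 < n)%N -> gamma n (r *: b) = r ^+ n *: gamma n b),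
          (forall (m n : nat) a, (0 < m)%N -> (0 < n)%N ->
             mul (gamma m a) (gamma n a) = gamma (m + n)%N a *+ 'C(m + n, m))
        & (forall (m n : nat) a, (0 < m)%N -> (0 < n)%N ->
             gamma m (gamma n a) =
               gamma (m * n)%N a *+ ((m * n)`! %/ (m`! * (n`! ^ m))))]].

Definition zmul (A : lmodType R) : A -> A -> A := fun _ _ => 0.

Definition isDPMap (A B : lmodType R) (mulA : A -> A -> A) (gA : nat -> A -> A)
  (mulB : B -> B -> B) (gB : nat -> B -> B) (f : A -> B) : Prop :=
  [/\ (forall a b, f (a + b) = f a + f b),
      (forall (r : R) a, f (r *: a) = r *: f a),
      (forall a b, f (mulA a b) = mulB (f a) (f b))
    & (forall (n : nat) a, (0 < n)%N -> f (gA n a) = gB n (f a))].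

(* left U(0)-modules: an R-module M with operators phi p for p prime
   (the values of phi at non-primes are irrelevant) *)
Definition isU0Mod (M : lmodType R) (phi : nat -> M -> M) : Prop :=
  [/\ (forall p x y, prime p -> phi p (x + y) = phi p x + phi p y),
      (forall p q x, prime p -> prime q -> phi p (phi q x) = phi q (phi p x)),
      (forall p x, prime p -> phi p x *+ p = 0)
    & (forall p (r : R) x, prime p -> phi p (r *: x) = r ^+ p *: phi p x)].

Definition isU0Map (M N : lmodType R) (phiM : nat -> M -> M) (phiN : nat -> N -> N)
  (f : M -> N) : Prop :=
  [/\ (forall x y, f (x + y) = f x + f y),
      (forall (r : R) x, f (r *: x) = r *: f x)
    & (forall p x, prime p -> f (phiM p x) = phiN p (f x))].

(* action of the element phi_n of U(0): phi_1 = 1, phi_{p^e} = phi_p^e,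
   phi_n = 0 if n > 1 is not a prime power *)
Definition phin (M : lmodType R) (phi : nat -> M -> M) (n : nat) (x : M) : M :=
  if n == 1%N then x
  else if (1 < n)%N && (n == pdiv n ^ logn (pdiv n) n)%N
       then iter (logn (pdiv n) n) (phi (pdiv n)) x
       else 0.

End DP.

(* Main.v *)
Require Import Defs.
From mathcomp Require Import all_boot all_algebra.
From mathcomp Require Import zify.
From Stdlib Require Import ArithRing.
Set Implicit Arguments. Unset Strict Implicit. Unset Printing Implicit Defensive.
Import GRing.Theory.
Local Open Scope nat_scope.
Lemma ppow_bin p e m : prime p -> 0 < m < p ^ e -> p %| 'C(p ^ e, m).
Proof.
move=> pp /andP[m0 mlt].
have e0 : 0 < e by case: e mlt => //; rewrite expn0; lia.
have := mul_bin_diag (p ^ e) m.-1; rewrite prednK // => H.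
apply/negPn/negP => nd.
have cop : coprime (p ^ e) 'C(p ^ e, m).
  by rewrite coprime_sym coprime_pexpr // coprime_sym prime_coprime.
have : p ^ e %| 'C(p ^ e, m) * m by rewrite mulnC -H dvdn_mulr.
rewrite Gauss_dvdr // => /dvdn_leq => /(_ m0); lia.
Qed.

Lemma bin_step p f k : prime p -> 0 < k ->
  'C(k.+1 * p ^ f - 1, p ^ f - 1) %% p = 'C(k * p ^ f - 1, p ^ f - 1) %% p.
Proof.
move=> pp k0; set n := p ^ f.
have n0 : 0 < n by rewrite expn_gt0 prime_gt0.
have := binomial.Vandermonde n (k * n - 1) (n - 1).
have -> : n + (k * n - 1) = k.+1 * n - 1 by rewrite mulSn; have := leq_pmull n k0; lia.
move=> <-; rewrite big_ord_recl /= bin0 mul1n subn0.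
have : p %| \sum_(i < n - 1) 'C(n, bump 0 i) * 'C(k * n - 1, n - 1 - bump 0 i).
  apply: dvdn_sum => i _; apply: dvdn_mulr; apply: ppow_bin => //.
  rewrite /bump /=; have := ltn_ord i; lia.
move=> /dvdnP [q ->]; by rewrite addnC modnMDl.
Qed.

Lemma bin_one p f k : prime p -> 0 < k ->
  'C(k * p ^ f - 1, p ^ f - 1) %% p = 1.
Proof.
move=> pp; elim: k => // -[_ _|k IH _].
  by rewrite mul1n binn modn_small // prime_gt1.
by rewrite bin_step // IH.
Qed.

Fixpoint Pm n m := if m is m'.+1 then Pm n m' * 'C(m'.+1 * n - 1, n - 1) else 1.

Lemma fact_mul n m : 0 < n -> (m * n)`! = m`! * n`! ^ m * Pm n m.
Proof.
move=> n0; elim: m => [|m IH]; first by rewrite mul0n.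
set N := m.+1 * n.
have nN : n <= N by rewrite /N mulSn leq_addr.
have H1 := bin_fact nN.
have := mul_bin_diag N (n - 1); rewrite subn1 prednK // => H2.
have H3 : 'C(N, n) = m.+1 * 'C(N - 1, n - 1).
  apply/eqP; rewrite -(eqn_pmul2l n0) -H2 subn1 /N mulnCA mulnA; by rewrite subn1.
have HNn : N - n = m * n by rewrite /N mulSn addnC addnK.
rewrite -H1 H3 HNn IH /= factS expnS.
rewrite -/N -!multE; ring.
Qed.

Lemma coef_Pm m n : 0 < n -> (m * n)`! %/ (m`! * n`! ^ m) = Pm n m.
Proof.
move=> n0; rewrite fact_mul // mulKn // muln_gt0 fact_gt0 expn_gt0 fact_gt0 //.
Qed.

Lemma Pm_one p f m : prime p -> Pm (p ^ f) m %% p = 1.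
Proof.
move=> pp; elim: m => [|m IH] /=; first by rewrite modn_small // prime_gt1.
by rewrite -modnMml IH mul1n bin_one.
Qed.

Lemma Pm_n1 n : Pm n 1 = 1.
Proof. by rewrite /= !mul1n binn. Qed.

Lemma Pm_1m m : Pm 1 m = 1.
Proof. by elim: m => //= m ->; rewrite subnn bin0. Qed.

Definition ppowb n := (1 < n) && (n == pdiv n ^ logn (pdiv n) n).

Lemma ppowP n : reflect (exists p e, [/\ prime p, 0 < e & n = p ^ e]) (ppowb n).
Proof.
apply: (iffP andP) => [[n1 /eqP E]|[p [e [pp e0 ->]]]].
  exists (pdiv n), (logn (pdiv n) n); split => //; first exact: pdiv_prime.
  by case: (logn _ _) E => // E; move: n1; rewrite E expn0.
case: e e0 => // e _; split; first by rewrite -(exp1n e.+1) ltn_exp2r // prime_gt1.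
by rewrite pdiv_pfactor // pfactorK.
Qed.

Lemma ppow_dvd r k d : prime r -> 1 < d -> d %| r ^ k ->
  exists2 j, 0 < j & d = r ^ j.
Proof.
move=> pr d1 /(dvdn_pfactor _ _ pr) [j _ E]; exists j => //.
by case: j E d1 => // ->.
Qed.

Lemma primes_cop p q : prime p -> prime q -> p != q -> coprime p q.
Proof. by move=> pp pq ne; rewrite prime_coprime // dvdn_prime2. Qed.

Section Alg.
Local Open Scope ring_scope.

Lemma z_gcd (V : zmodType) (z : V) a b : (0 < a)%N -> z *+ a = 0 -> z *+ b = 0 ->
  z *+ gcdn a b = 0.
Proof.
move=> a0 za zb; case: (egcdnP b a0) => km kn E _.
have : z *+ (km * a) = z *+ (kn * b + gcdn a b) by rewrite E.
by rewrite mulrnDr (mulnC km) (mulnC kn) !mulrnA za zb !mul0rn add0r => <-.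
Qed.

Lemma z_cop (V : zmodType) (z : V) a b : (0 < a)%N -> coprime a b ->
  z *+ a = 0 -> z *+ b = 0 -> z = 0.
Proof. by move=> a0 /eqP c za zb; have := z_gcd a0 za zb; rewrite c. Qed.

Lemma z_one (V : zmodType) (z : V) p x : z *+ p = 0 -> (x %% p = 1)%N -> z *+ x = z.
Proof.
move=> zp xp; rewrite (divn_eq x p) xp mulrnDr mulrnA mulrnAC zp mul0rn add0r.
by rewrite mulr1n.
Qed.

Lemma descent (V : zmodType) (z : V) N :
  (forall p, prime p -> (p %| N)%N -> exists2 c, (c %% p = 1)%N & z *+ c = 0) ->
  forall d, (0 < d)%N -> (d %| N)%N -> z *+ d = 0 -> z = 0.
Proof.
move=> H d; have [k] := ubnP d; elim: k d => // k IH d dk d0 dN zd.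
case: (ltnP 1 d) => d1; last first.
  by move: zd; have -> : d = 1%N by lia; rewrite mulr1n.
have pp := pdiv_prime d1.
have [c cp zc] := H _ pp (dvdn_trans (pdiv_dvd d) dN).
have g0 : (0 < gcdn d c)%N by rewrite gcdn_gt0 d0.
apply: (IH (gcdn d c)) => //.
- have : (gcdn d c <= d)%N by apply: dvdn_leq => //; apply: dvdn_gcdl.
  have : (gcdn d c != d)%N.
    apply/negP => /eqP E.
    have : (pdiv d %| c)%N by rewrite (dvdn_trans (pdiv_dvd d)) // -E dvdn_gcdr.
    by rewrite /dvdn cp.
  lia.
- exact: dvdn_trans (dvdn_gcdl _ _) dN.
- exact: z_gcd.
Qed.

End Alg.

Section U0.
Local Open Scope ring_scope.
Variable R : comPzRingType.
Variable M : lmodType R.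
Variable phi : nat -> M -> M.
Hypothesis H : isU0Mod phi.

Lemma phi_add p x y : prime p -> phi p (x + y) = phi p x + phi p y.
Proof. by case: H => h _ _ _; apply: h. Qed.

Lemma phi0 p : prime p -> phi p 0 = 0.
Proof. move=> pp; have := phi_add 0 0 pp; rewrite addr0 => h; apply: (addrI (phi p 0)); by rewrite addr0 -h. Qed.

Lemma it_add p e x y : prime p -> iter e (phi p) (x + y) = iter e (phi p) x + iter e (phi p) y.
Proof. by move=> pp; elim: e => //= e ->; rewrite phi_add. Qed.

Lemma it0 p e : prime p -> iter e (phi p) 0 = 0.
Proof. by move=> pp; elim: e => //= e ->; rewrite phi0. Qed.

Lemma it_muln p e x k : prime p -> iter e (phi p) (x *+ k) = iter e (phi p) x *+ k.
Proof.
move=> pp; elim: k => [|k IH]; first by rewrite !mulr0n it0.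
by rewrite !mulrS it_add // IH.
Qed.

Lemma it_scale p e (r : R) x : prime p ->
  iter e (phi p) (r *: x) = r ^+ (p ^ e) *: iter e (phi p) x.
Proof.
move=> pp; elim: e => [|e IH] /=; first by rewrite expn0 expr1.
case: H => _ _ _ hs; rewrite IH hs // -exprM expnSr. by [].
Qed.

Lemma it_kill p e x : prime p -> (0 < e)%N -> iter e (phi p) x *+ p = 0.
Proof. by move=> pp; case: e => // e _ /=; case: H => _ _ hk _; apply: hk. Qed.

Lemma it_comm p q e x : prime p -> prime q ->
  iter e (phi p) (phi q x) = phi q (iter e (phi p) x).
Proof. by move=> pp pq; elim: e => //= e ->; case: H => _ hc _ _; apply: hc. Qed.

Lemma phin1 x : phin phi 1 x = x.
Proof. by []. Qed.

Lemma phin_pe p e x : prime p -> (0 < e)%N -> phin phi (p ^ e) x = iter e (phi p) x.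
Proof.
move=> pp e0; have pb : ppowb (p ^ e) by apply/ppowP; exists p, e.
move: (pb); rewrite /phin /ppowb => /andP [p1 _].
rewrite (negbTE (_ : (p ^ e)%N != 1%N)) ?pb; last by move: p1; lia.
move: pb; rewrite /ppowb => ->; by case: e e0 p1 => // e _ _; rewrite pdiv_pfactor // pfactorK.
Qed.

Lemma phin_np n x : (1 < n)%N -> ~~ ppowb n -> phin phi n x = 0.
Proof.
move=> n1 np; rewrite /phin (negbTE (_ : n != 1%N)); last by move: n1; lia.
by move: np; rewrite /ppowb => /negbTE ->.
Qed.

Lemma phin_0 n : phin phi n 0 = 0.
Proof.
rewrite /phin; case: ifP => // _; case: ifP => // /andP [n1 _].
by rewrite it0 // pdiv_prime.
Qed.

Lemma phin_add n x y : phin phi n (x + y) = phin phi n x + phin phi n y.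
Proof.
rewrite /phin; case: ifP => // _; case: ifP => [/andP [n1 _]|_]; last by rewrite addr0.
by rewrite it_add // pdiv_prime.
Qed.

Lemma phin_scale n (r : R) x : (0 < n)%N -> phin phi n (r *: x) = r ^+ n *: phin phi n x.
Proof.
move=> n0; case: (eqVneq n 1%N) => [->|n1]; first by rewrite !phin1 expr1.
have n2 : (1 < n)%N by lia.
case: (boolP (ppowb n)) => [/ppowP [p [e [pp e0 ->]]]|nb].
  by rewrite !phin_pe // it_scale.
by rewrite !phin_np // scaler0.
Qed.

Lemma phin_comp m n a : (0 < m)%N -> (0 < n)%N ->
  phin phi m (phin phi n a) = phin phi (m * n) a *+ Pm n m.
Proof.
move=> m0 n0; case: (eqVneq m 1%N) => [->|m1].
  by rewrite mul1n Pm_n1 mulr1n phin1.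
case: (eqVneq n 1%N) => [->|n1].
  by rewrite muln1 Pm_1m mulr1n phin1.
have m2 : (1 < m)%N by lia.
have n2 : (1 < n)%N by lia.
have mn2 : (1 < m * n)%N by rewrite -(muln1 1%N) ltn_mul.
case: (boolP (ppowb (m * n))) => [/ppowP [r [k [pr k0 E]]] | nb].
  have mr : (m %| r ^ k)%N by rewrite -E dvdn_mulr.
  have [e e0 me] := ppow_dvd pr m2 mr.
  have nr : (n %| r ^ k)%N by rewrite -E dvdn_mull.
  have [f f0 ne] := ppow_dvd pr n2 nr.
  subst m n; rewrite -expnD !phin_pe ?addn_gt0 ?e0 // iterD.
  apply: esym; apply: (z_one (p := r)); first exact: it_kill.
  exact: Pm_one.
rewrite (phin_np _ mn2 nb) mul0rn.
case: (boolP (ppowb n)) => [/ppowP [q [f [pq f0 ne]]]| nnb]; last first.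
  by rewrite (phin_np _ n2 nnb) phin_0.
case: (boolP (ppowb m)) => [/ppowP [p [e [pp e0 me]]]| nmb]; last first.
  by rewrite phin_np.
case: (eqVneq p q) => [pq'|pq'].
  subst; exfalso; move/negP: nb; apply; apply/ppowP; exists q, (e + f)%N; split => //; first by rewrite addn_gt0 e0.
  by rewrite expnD.
subst m n; rewrite !phin_pe //.
apply: (z_cop _ (primes_cop pp pq pq')); first exact: prime_gt0.
  exact: it_kill.
by rewrite -it_muln // it_kill // it0.
Qed.

Lemma phin_binom m n a : (0 < m)%N -> (0 < n)%N ->
  0 = phin phi (m + n) a *+ 'C(m + n, m).
Proof.
move=> m0 n0; have N1 : (1 < m + n)%N by lia.
case: (boolP (ppowb (m + n))) => [/ppowP [p [e [pp e0 E]]]|nb].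
  have : (p %| 'C(p ^ e, m))%N by apply: ppow_bin => //; rewrite m0 -E; lia.
  case/dvdnP => q Eq; rewrite E Eq phin_pe // mulrnA mulrnAC it_kill //.
  by rewrite mul0rn.
by rewrite phin_np // mul0rn.
Qed.

Lemma dp_of_U0 : isDPAlg (@zmul R M) (phin phi).
Proof.
split.
- by [].
- by [].
- by move=> *; rewrite /zmul addr0.
- by move=> *; rewrite /zmul scaler0.
split.
- split; first by [].
  by move=> n a b n0; rewrite phin_add big1 ?addr0.
- by move=> n a b n0; rewrite /zmul phin_0.
- by move=> n r b n0; apply: phin_scale.
- by move=> m n a m0 n0; rewrite /zmul; apply: phin_binom.
- by move=> m n a m0 n0; rewrite coef_Pm //; apply: phin_comp.
Qed.

End U0.

Section DPs.
Local Open Scope ring_scope.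
Variable R : comPzRingType.
Variable A : lmodType R.
Variable gamma : nat -> A -> A.
Hypothesis HD : isDPAlg (@zmul R A) gamma.

Lemma g_add n x y : (0 < n)%N -> gamma n (x + y) = gamma n x + gamma n y.
Proof.
move=> n0; case: HD => _ _ _ _ [[_ ha] _ _ _ _]; rewrite ha // big1 ?addr0 //.
Qed.

Lemma g_0 n : (0 < n)%N -> gamma n 0 = 0.
Proof.
move=> n0; have := g_add 0 0 n0; rewrite addr0 => h; apply: (addrI (gamma n 0)).
by rewrite addr0 -h.
Qed.

Lemma g_muln n y k : (0 < n)%N -> gamma n (y *+ k) = gamma n y *+ (k ^ n).
Proof.
move=> n0; case: HD => _ _ _ _ [_ _ hs _ _].
by rewrite -scaler_nat hs // -natrX scaler_nat.
Qed.

Lemma g_killN N y : (1 < N)%N -> gamma N y *+ N = 0.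
Proof.
move=> N1; case: HD => _ _ _ _ [_ _ _ hm _].
have := hm 1%N N.-1 y isT; rewrite (_ : (1 + N.-1 = N)%N); last by lia.
by rewrite bin1 => <- //; lia.
Qed.

Lemma g_comp m n a : (0 < m)%N -> (0 < n)%N ->
  gamma m (gamma n a) = gamma (m * n) a *+ Pm n m.
Proof.
move=> m0 n0; case: HD => _ _ _ _ [_ _ _ _ hc]; by rewrite hc // coef_Pm.
Qed.

Lemma g_cop N y k : (1 < N)%N -> y *+ k = 0 -> coprime N (k ^ N) -> gamma N y = 0.
Proof.
move=> N1 yk cop; apply: (z_cop _ cop); first by lia.
  exact: g_killN.
by rewrite -g_muln ?yk ?g_0 //; lia.
Qed.

Lemma gp_kill p y : prime p -> gamma p y *+ p = 0.
Proof. by move=> pp; apply: g_killN; apply: prime_gt1. Qed.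

Lemma g_pe p e a : prime p -> (0 < e)%N -> gamma (p ^ e) a = iter e (gamma p) a.
Proof.
move=> pp; elim: e => // -[_ _|e IH _]; first by rewrite expn1.
set z := gamma (p ^ e.+2) a.
have p1 := prime_gt1 pp.
have hc := g_comp a (prime_gt0 pp) (_ : 0 < p ^ e.+1)%N.
rewrite -expnS in hc; have {}hc := hc (ltac:(rewrite expn_gt0 prime_gt0 //)).
have c1 : (Pm (p ^ e.+1) p %% p = 1)%N by apply: Pm_one.
have zp : z *+ p = 0.
  have w1 : z *+ p *+ Pm (p ^ e.+1) p = 0.
    by rewrite mulrnAC -hc gp_kill.
  have w2 : z *+ p *+ (p ^ e.+1) = 0.
    by rewrite -mulrnA -expnS g_killN // -(exp1n e.+2) ltn_exp2r.
  apply: (z_cop _ _ w1 w2); first by move: c1; case: (Pm _ _) => //; rewrite mod0n.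
  rewrite coprime_sym coprimeXl // prime_coprime //; apply/negP => /dvdnP [q E].
  by move: c1; rewrite E modnMl.
rewrite iterS -IH // hc; exact: (esym (z_one zp c1)).
Qed.

Lemma g_np N a : (1 < N)%N -> ~~ ppowb N -> gamma N a = 0.
Proof.
move=> N1 nN; have [k] := ubnP N; elim: k N N1 nN a => // k IH N N1 nN a Nk.
have z0 : (0 < N)%N by lia.
apply: (descent (N := N) _ z0 (dvdnn N) (g_killN a N1)) => p pp pN.
exists (Pm p (N %/ p)); first by have := @Pm_one p 1 (N %/ p) pp; rewrite expn1.
set Mq := (N %/ p)%N.
have NE : N = (Mq * p)%N by rewrite divnK.
have M0 : (0 < Mq)%N by move: z0; rewrite NE muln_gt0 => /andP [].
rewrite {1}NE -(g_comp a M0 (prime_gt0 pp)).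
have M1 : (1 < Mq)%N.
  case: (ltnP 1 Mq) => // h; have M_1 : Mq = 1%N by lia.
  by move: nN; rewrite NE M_1 mul1n; case/ppowP; exists p, 1%N; rewrite expn1.
have MN : (Mq < N)%N by rewrite NE ltn_Pmulr // prime_gt1.
case: (boolP (ppowb Mq)) => [/ppowP [q [f [pq f0 ME]]]|nM]; last first.
  exact: (IH _ M1 nM _ (leq_trans MN Nk)).
case: (eqVneq q p) => [qp|qp].
  move: nN; rewrite NE ME qp -expnSr; case/ppowP; exists p, f.+1; split=> //.
apply: (g_cop M1 (gp_kill a pp)).
by rewrite ME coprimeXl // coprimeXr // primes_cop.
Qed.

Lemma g_round n a : (0 < n)%N -> phin gamma n a = gamma n a.
Proof.
move=> n0; case: (eqVneq n 1%N) => [->|n1]; first by case: HD => _ _ _ _ [[h _] _ _ _ _]; rewrite h.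
have n2 : (1 < n)%N by lia.
case: (boolP (ppowb n)) => [/ppowP [p [e [pp e0 ->]]]|nb].
  by rewrite g_pe // phin_pe.
by rewrite phin_np // g_np.
Qed.

End DPs.

Section Fin.
Local Open Scope ring_scope.
Variable R : comPzRingType.

Lemma U0_of_dp (A : lmodType R) (gamma : nat -> A -> A) :
  isDPAlg (@zmul R A) gamma -> isU0Mod gamma.
Proof.
move=> HD; split.
- by move=> p x y pp; apply: (g_add HD); apply: prime_gt0.
- move=> p q x pp pq; case: (eqVneq p q) => [->//|ne].
  rewrite (g_cop HD (prime_gt1 pp) (gp_kill HD x pq)); last first.
    by apply: coprimeXr; apply: primes_cop.
  rewrite (g_cop HD (prime_gt1 pq) (gp_kill HD x pp)) //.
  by apply: coprimeXr; apply: primes_cop; rewrite // eq_sym.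
- by move=> p x pp; apply: gp_kill.
- by move=> p r x pp; case: HD => _ _ _ _ [_ _ hs _ _]; apply: hs; apply: prime_gt0.
Qed.

Lemma phin_map (A B : lmodType R) (gA : nat -> A -> A) (gB : nat -> B -> B) (f : A -> B) n a :
  (forall x y, f (x + y) = f x + f y) ->
  (forall p x, prime p -> f (gA p x) = gB p (f x)) ->
  f (phin gA n a) = phin gB n (f a).
Proof.
move=> ha hg.
have f0 : f 0 = 0.
  have := ha 0 0; rewrite addr0 => h; apply: (addrI (f 0)); by rewrite addr0 -h.
rewrite /phin; case: ifP => // _; case: ifP => [/andP [n1 _]|_ //].
by elim: (logn _ _) => //= k IH; rewrite hg ?pdiv_prime // IH.
Qed.

End Fin.

Unset Implicit Arguments.
Local Open Scope ring_scope.

Theorem mainTheorem3 (R : comPzRingType) :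
  (* functor DPAlg (zero product) -> U(0)-Mod on objects: phi_p := gamma_p *)
  (forall (A : lmodType R) (gamma : nat -> A -> A),
     isDPAlg (@zmul R A) gamma -> isU0Mod gamma)
  /\
  (* functor U(0)-Mod -> DPAlg (zero product) on objects: gamma_n := phi_n *)
  (forall (M : lmodType R) (phi : nat -> M -> M),
     isU0Mod phi -> isDPAlg (@zmul R M) (phin phi))
  /\
  (* round trip on DP algebras is the identity *)
  (forall (A : lmodType R) (gamma : nat -> A -> A),
     isDPAlg (@zmul R A) gamma ->
     forall (n : nat) (a : A), (0 < n)%N -> phin gamma n a = gamma n a)
  /\
  (* round trip on U(0)-modules is the identity *)
  (forall (M : lmodType R) (phi : nat -> M -> M),
     isU0Mod phi -> forall (p : nat) (x : M), prime p -> phin phi p x = phi p x)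
  /\
  (* on morphisms both functors are the identity on underlying maps, and
     the morphism sets coincide *)
  (forall (A B : lmodType R) (gA : nat -> A -> A) (gB : nat -> B -> B) (f : A -> B),
     isDPAlg (@zmul R A) gA -> isDPAlg (@zmul R B) gB ->
     (isDPMap (@zmul R A) gA (@zmul R B) gB f <-> isU0Map gA gB f)).
Proof.
split; first exact: U0_of_dp.
split; first by move=> M phi H; apply: dp_of_U0.
split; first by move=> A gamma HD n a n0; apply: g_round.
split.
  by move=> M phi H p x pp; have := phin_pe phi x pp (isT : (0 < 1)%N); rewrite expn1.
move=> A B gA gB f HA HB; split.
  by case=> ha hs _ hg; split => // p x pp; apply: hg; apply: prime_gt0.
case=> ha hs hg; split => //.
  move=> a b; rewrite /zmul.
  have := ha 0 0; rewrite addr0 => h; apply: (addrI (f 0)); by rewrite addr0 -h.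
move=> n a n0; rewrite -(g_round HA a n0) -(g_round HB (f a) n0).
exact: phin_map.
Qed.
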